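(* Let $\Lambda\in\mathbb{N}$ and let $k$ be a real number with $k\ge\Lambda^2(\Lambda+1)^2$. For $\alpha\in[0,2\pi)$ and $\beta=(\beta_{-\Lambda},\dots,\beta_\Lambda)\in\mathbb{R}^{2\Lambda+1}$ let $$\bm{\omega}_\alpha^\beta:=\sum_{m=-\Lambda}^{\Lambda}\frac{e^{i(\alpha m+\beta_m)}}{\sqrt{2\Lambda+1}}\psi_m,\qquad P_\alpha^\beta:=\bm{\omega}_\alpha^\beta\langle\bm{\omega}_\alpha^\beta,\cdot\rangle.$$ Then: (i) $I=\frac{2\Lambda+1}{2\pi}\int_0^{2\pi}d\alpha\,P_\alpha^\beta$ for every $\beta$; (ii) on every $\bm{\omega}_\alpha^\beta$, $\langle L\rangle=0$ and $(\Delta L)^2=\Lambda(\Lambda+1)/3$; (iii) for all $\alpha,\beta$, $(\Delta\bm{x})^2_{\bm{\omega}_\alpha^\beta}\ge(\Delta\bm{x})^2_{\bm{\omega}_\alpha^0}$, and $$(\Delta\bm{x})^2_{\bm{\omega}_\alpha^0}<\frac{1}{\Lambda+1}\left(\frac12+\frac{1}{3\Lambda}\right),$$ which is $\le \frac{2}{3(\Lambda+1)}$ when $\Lambda\ge2$.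
   Context: (Fuzzy circle $S^1_\Lambda$.) $\mathcal{H}_\Lambda$ is a $(2\Lambda+1)$-dimensional Hilbert space with orthonormal basis $\{\psi_n\}_{n=-\Lambda}^{\Lambda}$ (inner product antilinear in the first argument). Operators: $L\psi_n=n\psi_n$; $x_+\psi_n=b_{n+1}\psi_{n+1}$, $x_-\psi_n=b_n\psi_{n-1}$, where $b_n=\sqrt{1+n(n-1)/k}$ if $1-\Lambda\le n\le\Lambda$ and $b_n=0$ otherwise (so the undefined vectors $\psi_{\pm(\Lambda+1)}$ never occur with nonzero coefficient); $x_1=(x_++x_-)/2$, $x_2=(x_+-x_-)/(2i)$, $\bm{x}^2=x_1^2+x_2^2$. For a unit vector $\bm{\chi}$, $\langle A\rangle=\langle\bm{\chi},A\bm{\chi}\rangle$, $(\Delta L)^2=\langle L^2\rangle-\langle L\rangle^2$, and $(\Delta\bm{x})^2_{\bm\chi}=\langle\bm{x}^2\rangle-\langle x_1\rangle^2-\langle x_2\rangle^2$. *)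

(* Defs.v *)
From Stdlib Require Import Reals ZArith.
From Coquelicot Require Import Coquelicot.

Open Scope R_scope.

(* Vectors of H_Lambda: coordinates w.r.t. the orthonormal basis psi_n,
   indexed by n : Z; only the coordinates -Lambda <= n <= Lambda matter. *)
Definition vec := Z -> C.

Definition sumZ (Lam : nat) (f : Z -> C) : C :=
  @sum_n_m C_AbelianGroup (fun j : nat => f (Z.of_nat j - Z.of_nat Lam)%Z) 0 (2 * Lam).

Definition inner (Lam : nat) (u v : vec) : C :=
  sumZ Lam (fun n => Cmult (Cconj (u n)) (v n)).

Definition bcoef (Lam : nat) (k : R) (n : Z) : R :=
  if (Z.leb (1 - Z.of_nat Lam) n && Z.leb n (Z.of_nat Lam))%bool
  then sqrt (1 + IZR n * (IZR n - 1) / k) else 0.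

Definition Lop (v : vec) : vec := fun n => Cmult (RtoC (IZR n)) (v n).

(* x_+ psi_n = b_{n+1} psi_{n+1}: coefficient of psi_m in x_+ v is b_m v_{m-1} *)
Definition xplus (Lam : nat) (k : R) (v : vec) : vec :=
  fun m => Cmult (RtoC (bcoef Lam k m)) (v (m - 1)%Z).

(* x_- psi_n = b_n psi_{n-1}: coefficient of psi_m in x_- v is b_{m+1} v_{m+1} *)
Definition xminus (Lam : nat) (k : R) (v : vec) : vec :=
  fun m => Cmult (RtoC (bcoef Lam k (m + 1)%Z)) (v (m + 1)%Z).

Definition x1op (Lam : nat) (k : R) (v : vec) : vec :=
  fun m => Cdiv (Cplus (xplus Lam k v m) (xminus Lam k v m)) (RtoC 2).
Definition x2op (Lam : nat) (k : R) (v : vec) : vec :=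
  fun m => Cdiv (Cminus (xplus Lam k v m) (xminus Lam k v m)) (Cmult (RtoC 2) Ci).

Definition xsqop (Lam : nat) (k : R) (v : vec) : vec :=
  fun m => Cplus (x1op Lam k (x1op Lam k v) m) (x2op Lam k (x2op Lam k v) m).

Definition expect (Lam : nat) (A : vec -> vec) (chi : vec) : C :=
  inner Lam chi (A chi).

Definition varL (Lam : nat) (chi : vec) : C :=
  Cminus (expect Lam (fun v => Lop (Lop v)) chi)
         (Cmult (expect Lam Lop chi) (expect Lam Lop chi)).

(* (Delta x)^2 = <x^2> - <x_1>^2 - <x_2>^2 (a real number; we take its real part) *)
Definition varX (Lam : nat) (k : R) (chi : vec) : R :=
  Re (Cminus (Cminus (expect Lam (xsqop Lam k) chi)
                     (Cmult (expect Lam (x1op Lam k) chi) (expect Lam (x1op Lam k) chi)))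
             (Cmult (expect Lam (x2op Lam k) chi) (expect Lam (x2op Lam k) chi))).

Definition cexpi (t : R) : C := (cos t, sin t).

Definition omega (Lam : nat) (alpha : R) (beta : Z -> R) : vec :=
  fun m => Cdiv (cexpi (alpha * IZR m + beta m)) (RtoC (sqrt (2 * INR Lam + 1))).

Definition Pop (Lam : nat) (alpha : R) (beta : Z -> R) (v : vec) : vec :=
  fun m => Cmult (omega Lam alpha beta m) (inner Lam (omega Lam alpha beta) v).

(* Main.v *)
Require Import Defs.
From Stdlib Require Import Reals ZArith Lra Lia.
From Coquelicot Require Import Coquelicot.
Open Scope R_scope.

Definition sR (Lam : nat) (f : Z -> R) : R :=
  @sum_n_m R_AbelianGroup (fun j : nat => f (Z.of_nat j - Z.of_nat Lam)%Z) 0 (2 * Lam).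

Ltac toR := match goal with |- ?a = ?b => change (@eq R a b) end.

Lemma plusR (x y : R) : @plus R_AbelianGroup x y = x + y.
Proof. reflexivity. Qed.

Lemma sum_C_pair (g : nat -> C) n :
  @sum_n_m C_AbelianGroup g 0 n =
  (@sum_n_m R_AbelianGroup (fun j => fst (g j)) 0 n,
   @sum_n_m R_AbelianGroup (fun j => snd (g j)) 0 n).
Proof.
  induction n.
  - rewrite !sum_n_n. destruct (g 0%nat); reflexivity.
  - rewrite !sum_n_Sm; try lia. rewrite IHn. reflexivity.
Qed.

Lemma sumZ_pair Lam f : sumZ Lam f = (sR Lam (fun n => fst (f n)), sR Lam (fun n => snd (f n))).
Proof. unfold sumZ, sR. apply sum_C_pair. Qed.

Lemma sR_ext Lam f g : (forall n, (- Z.of_nat Lam <= n <= Z.of_nat Lam)%Z -> f n = g n) ->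
  sR Lam f = sR Lam g.
Proof. intros H. unfold sR. apply sum_n_m_ext_loc. intros j Hj. apply H. lia. Qed.

Lemma sR_plus Lam f g : sR Lam (fun n => f n + g n) = sR Lam f + sR Lam g.
Proof. unfold sR. apply (@sum_n_m_plus R_AbelianGroup). Qed.

Lemma sR_scal Lam a f : sR Lam (fun n => a * f n) = a * sR Lam f.
Proof. unfold sR. apply (@sum_n_m_mult_l R_Ring). Qed.

Lemma sR_opp Lam f : sR Lam (fun n => - f n) = - sR Lam f.
Proof.
  transitivity (sR Lam (fun n => -1 * f n)). apply sR_ext; intros; ring.
  rewrite sR_scal; ring.
Qed.

Lemma sum0_le (a b : nat -> R) n : (forall j, (j <= n)%nat -> a j <= b j) ->
  @sum_n_m R_AbelianGroup a 0 n <= @sum_n_m R_AbelianGroup b 0 n.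
Proof.
  induction n; intros H.
  - rewrite !sum_n_n. apply H; lia.
  - rewrite !sum_n_Sm; try lia. apply Rplus_le_compat. apply IHn; intros; apply H; lia.
    apply H; lia.
Qed.

Lemma sR_le Lam f g : (forall n, (- Z.of_nat Lam <= n <= Z.of_nat Lam)%Z -> f n <= g n) ->
  sR Lam f <= sR Lam g.
Proof. intros H. unfold sR. apply sum0_le. intros j Hj. apply H. lia. Qed.

Lemma sum_shift0 (g : nat -> R) n :
  @sum_n_m R_AbelianGroup (fun j => g (S j)) 0 n = @sum_n_m R_AbelianGroup g 0 (S n) - g 0%nat.
Proof.
  induction n.
  - rewrite sum_n_n, sum_n_Sm, sum_n_n; try lia. unfold plus; simpl; ring.
  - rewrite sum_n_Sm by lia. rewrite IHn.
    replace (@sum_n_m R_AbelianGroup g 0 (S (S n))) with (plus (@sum_n_m R_AbelianGroup g 0 (S n)) (g (S (S n))))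
      by (symmetry; apply sum_n_Sm; lia).
    unfold plus; simpl; ring.
Qed.

Lemma sR_shift Lam f : f (- Z.of_nat Lam)%Z = 0 -> f (Z.of_nat Lam + 1)%Z = 0 ->
  sR Lam (fun n => f (n + 1)%Z) = sR Lam f.
Proof.
  intros H0 H1. unfold sR.
  set (g := fun j : nat => f (Z.of_nat j - Z.of_nat Lam)%Z).
  transitivity (@sum_n_m R_AbelianGroup (fun j => g (S j)) 0 (2 * Lam)).
  { apply sum_n_m_ext_loc. intros j _. unfold g. f_equal. lia. }
  rewrite sum_shift0. rewrite sum_n_Sm by lia.
  replace (g 0%nat) with 0 by (unfold g; rewrite <- H0; f_equal).
  replace (g (S (2 * Lam))) with 0 by (unfold g; rewrite <- H1; f_equal; lia).
  unfold plus; simpl. ring.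
Qed.

Lemma sum_lin n a : @sum_n_m R_AbelianGroup (fun j => INR j - a) 0 n =
  INR n * (INR n + 1) / 2 - (INR n + 1) * a.
Proof.
  induction n.
  - rewrite sum_n_n. simpl. field.
  - rewrite sum_n_Sm by lia. rewrite IHn, plusR, S_INR. toR. field.
Qed.

Lemma sum_sq n a : @sum_n_m R_AbelianGroup (fun j => (INR j - a)^2) 0 n =
  INR n * (INR n + 1) * (2 * INR n + 1) / 6 - INR n * (INR n + 1) * a + (INR n + 1) * a^2.
Proof.
  induction n.
  - rewrite sum_n_n. simpl. field.
  - rewrite sum_n_Sm by lia. rewrite IHn, plusR, S_INR. toR. field.
Qed.

Lemma sum_ind n : @sum_n_m R_AbelianGroup (fun j => if Nat.eqb j 0 then 0 else 1) 0 n = INR n.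
Proof.
  induction n.
  - rewrite sum_n_n. reflexivity.
  - rewrite sum_n_Sm by lia. rewrite IHn, plusR, S_INR. toR. simpl; ring.
Qed.

Lemma IZR_shift j Lam : IZR (Z.of_nat j - Z.of_nat Lam) = INR j - INR Lam.
Proof. rewrite minus_IZR, <- !INR_IZR_INZ. reflexivity. Qed.

Lemma sR_id Lam : sR Lam IZR = 0.
Proof.
  unfold sR. rewrite (sum_n_m_ext_loc _ (fun j => INR j - INR Lam)).
  2:{ intros; apply IZR_shift. }
  rewrite sum_lin. rewrite mult_INR. simpl. field.
Qed.

Lemma sR_sq Lam : sR Lam (fun n => IZR n ^ 2) = INR Lam * (INR Lam + 1) * (2 * INR Lam + 1) / 3.
Proof.
  unfold sR. rewrite (sum_n_m_ext_loc _ (fun j => (INR j - INR Lam)^2)).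
  2:{ intros; rewrite IZR_shift; reflexivity. }
  rewrite sum_sq. rewrite mult_INR. simpl. field.
Qed.

Lemma sR_zero Lam : sR Lam (fun _ => 0) = 0.
Proof.
  transitivity (sR Lam (fun n => 0 * 0)). apply sR_ext; intros; ring.
  rewrite sR_scal; ring.
Qed.

Lemma sumZ_ext Lam f g : (forall n, (- Z.of_nat Lam <= n <= Z.of_nat Lam)%Z -> f n = g n) ->
  sumZ Lam f = sumZ Lam g.
Proof. intros H. unfold sumZ. apply sum_n_m_ext_loc. intros j Hj. apply H. lia. Qed.

Lemma sumZ_plus Lam f g : sumZ Lam (fun n => Cplus (f n) (g n)) = Cplus (sumZ Lam f) (sumZ Lam g).
Proof.
  rewrite !sumZ_pair. unfold Cplus; simpl. f_equal; rewrite <- sR_plus; reflexivity.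
Qed.

Lemma sumZ_scal Lam a f : sumZ Lam (fun n => Cmult a (f n)) = Cmult a (sumZ Lam f).
Proof.
  rewrite !sumZ_pair. destruct a as [a1 a2]. unfold Cmult; simpl. f_equal.
  - rewrite (sR_ext _ _ (fun n => a1 * fst (f n) + - (a2 * snd (f n)))) by (intros; ring).
    rewrite sR_plus, sR_opp, !sR_scal. ring.
    rewrite sR_plus, !sR_scal. ring.
Qed.

Lemma sumZ_RtoC Lam h : sumZ Lam (fun n => RtoC (h n)) = RtoC (sR Lam h).
Proof.
  rewrite sumZ_pair. simpl. unfold RtoC. f_equal. apply sR_zero.
Qed.

Lemma sumZ_shift Lam (f : Z -> C) : f (- Z.of_nat Lam)%Z = (0,0) -> f (Z.of_nat Lam + 1)%Z = (0,0) ->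
  sumZ Lam (fun n => f (n + 1)%Z) = sumZ Lam f.
Proof.
  intros H0 H1. rewrite !sumZ_pair. f_equal.
  apply (sR_shift Lam (fun n => fst (f n))); [rewrite H0|rewrite H1]; reflexivity.
  apply (sR_shift Lam (fun n => snd (f n))); [rewrite H0|rewrite H1]; reflexivity.
Qed.

Lemma sumZ_conj Lam f : Cconj (sumZ Lam f) = sumZ Lam (fun n => Cconj (f n)).
Proof.
  rewrite !sumZ_pair. unfold Cconj. simpl. f_equal. rewrite sR_opp. reflexivity.
Qed.

Lemma inner_lin Lam u (a b : C) v w :
  inner Lam u (fun m => Cplus (Cmult a (v m)) (Cmult b (w m))) =
  Cplus (Cmult a (inner Lam u v)) (Cmult b (inner Lam u w)).
Proof.
  unfold inner. rewrite <- !sumZ_scal, <- sumZ_plus. apply sumZ_ext. intros. field.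
Qed.

Lemma N_pos Lam : 0 < 2 * INR Lam + 1.
Proof. pose proof (pos_INR Lam). lra. Qed.

Lemma sqrtN_sq Lam : sqrt (2 * INR Lam + 1) * sqrt (2 * INR Lam + 1) = 2 * INR Lam + 1.
Proof. apply sqrt_sqrt. pose proof (N_pos Lam); lra. Qed.

Lemma sqrtN_pos Lam : 0 < sqrt (2 * INR Lam + 1).
Proof. apply sqrt_lt_R0, N_pos. Qed.

Lemma omega_eq Lam a b m : omega Lam a b m =
  (cos (a * IZR m + b m) / sqrt (2 * INR Lam + 1), sin (a * IZR m + b m) / sqrt (2 * INR Lam + 1)).
Proof.
  pose proof (sqrtN_pos Lam).
  unfold omega, cexpi, Cdiv, Cmult, Cinv, RtoC. simpl. f_equal; field; lra.
Qed.

Lemma omega_norm Lam a b m :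
  Cmult (Cconj (omega Lam a b m)) (omega Lam a b m) = RtoC (/ (2 * INR Lam + 1)).
Proof.
  rewrite omega_eq. pose proof (sqrtN_pos Lam). pose proof (sqrtN_sq Lam).
  pose proof (sin2_cos2 (a * IZR m + b m)). unfold Rsqr in *.
  set (s := sqrt (2 * INR Lam + 1)) in *. rewrite <- H0.
  set (c := cos _) in *. set (d := sin _) in *.
  unfold Cconj, Cmult, RtoC. simpl. f_equal.
  - rewrite <- (Rmult_1_l (/ (s*s))), <- H1. field. lra.
  - field. lra.
Qed.

Lemma RtoC_mult_eq (x y : R) : Cmult (RtoC x) (RtoC y) = RtoC (x * y).
Proof. unfold RtoC, Cmult; simpl; f_equal; ring. Qed.

Lemma expect_L Lam a b : expect Lam Lop (omega Lam a b) = RtoC 0.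
Proof.
  unfold expect, inner, Lop.
  rewrite (sumZ_ext _ _ (fun n => RtoC (/ (2 * INR Lam + 1) * IZR n))).
  2:{ intros n _. transitivity (Cmult (RtoC (IZR n)) (Cmult (Cconj (omega Lam a b n)) (omega Lam a b n))).
      ring. rewrite omega_norm, RtoC_mult_eq. f_equal; ring. }
  rewrite sumZ_RtoC, sR_scal, sR_id. f_equal; ring.
Qed.

Lemma varL_omega Lam a b : varL Lam (omega Lam a b) = RtoC (INR Lam * (INR Lam + 1) / 3).
Proof.
  unfold varL. rewrite expect_L.
  unfold expect, inner, Lop.
  rewrite (sumZ_ext _ _ (fun n => RtoC (/ (2 * INR Lam + 1) * (IZR n ^ 2)))).
  2:{ intros n _. transitivity (Cmult (RtoC (IZR n * IZR n)) (Cmult (Cconj (omega Lam a b n)) (omega Lam a b n))).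
      rewrite <- RtoC_mult_eq. ring. rewrite omega_norm, RtoC_mult_eq. f_equal; ring. }
  rewrite sumZ_RtoC, sR_scal, sR_sq. pose proof (N_pos Lam).
  unfold RtoC, Cminus, Cmult, Cplus, Copp; simpl. f_equal; field; lra.
Qed.

Lemma xsq_eq Lam k v m : xsqop Lam k v m =
  Cmult (RtoC ((bcoef Lam k m ^ 2 + bcoef Lam k (m + 1) ^ 2) / 2)) (v m).
Proof.
  unfold xsqop, x1op, x2op, xplus, xminus.
  replace (m - 1 + 1)%Z with m by lia. replace (m + 1 - 1)%Z with m by lia.
  destruct (v (m - 1 - 1)%Z) as [p1 p2], (v m) as [q1 q2], (v (m + 1 + 1)%Z) as [r1 r2].
  unfold Cdiv, Cminus, Cplus, Cmult, Cinv, Copp, RtoC, Ci; simpl.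
  f_equal; field.
Qed.

Lemma bcoef_lo Lam k : bcoef Lam k (- Z.of_nat Lam)%Z = 0.
Proof.
  unfold bcoef. replace (Z.leb (1 - Z.of_nat Lam) (- Z.of_nat Lam)) with false; [reflexivity|].
  symmetry; apply Z.leb_gt; lia.
Qed.

Lemma bcoef_hi Lam k : bcoef Lam k (Z.of_nat Lam + 1)%Z = 0.
Proof.
  unfold bcoef. replace (Z.leb (Z.of_nat Lam + 1) (Z.of_nat Lam)) with false;
  [now rewrite Bool.andb_false_r|].
  symmetry; apply Z.leb_gt; lia.
Qed.

Definition EplusO Lam k a b := inner Lam (omega Lam a b) (xplus Lam k (omega Lam a b)).

Lemma varX_formula Lam k a b :
  varX Lam k (omega Lam a b) =
  sR Lam (fun m => bcoef Lam k m ^ 2) / (2 * INR Lam + 1)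
  - (fst (EplusO Lam k a b) ^ 2 + snd (EplusO Lam k a b) ^ 2).
Proof.
  set (c := omega Lam a b).
  assert (H2 : RtoC 2 <> 0%C) by (intro H; injection H; lra).
  assert (Hi : Ci <> 0%C) by (intro H; injection H; lra).
  assert (E1 : expect Lam (x1op Lam k) c =
     Cplus (Cmult (Cinv 2) (inner Lam c (xplus Lam k c))) (Cmult (Cinv 2) (inner Lam c (xminus Lam k c)))).
  { unfold expect. rewrite <- inner_lin. unfold inner. apply sumZ_ext. intros m _. unfold x1op.
    f_equal; field; auto. }
  assert (E2 : expect Lam (x2op Lam k) c =
     Cplus (Cmult (Cinv (2 * Ci)) (inner Lam c (xplus Lam k c)))
           (Cmult (Copp (Cinv (2 * Ci))) (inner Lam c (xminus Lam k c)))).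
  { unfold expect. rewrite <- inner_lin. unfold inner. apply sumZ_ext. intros m _. unfold x2op.
    f_equal; field; auto. }
  assert (EM : inner Lam c (xminus Lam k c) = Cconj (EplusO Lam k a b)).
  { unfold EplusO, inner. fold c. rewrite sumZ_conj.
    set (F := fun m => Cmult (Cconj (c (m - 1)%Z)) (Cmult (RtoC (bcoef Lam k m)) (c m))).
    transitivity (sumZ Lam (fun m => F (m + 1)%Z)).
    { apply sumZ_ext. intros m _. unfold F, xminus. replace (m + 1 - 1)%Z with m by lia. ring. }
    rewrite sumZ_shift.
    - apply sumZ_ext. intros m _. unfold F, xplus.
      destruct (c (m-1)%Z) as [p1 p2], (c m) as [q1 q2].
      unfold Cconj, Cmult, RtoC; simpl. f_equal; ring.
    - unfold F. rewrite bcoef_lo. unfold Cmult, RtoC; simpl. f_equal; ring.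
    - unfold F. rewrite bcoef_hi. unfold Cmult, RtoC; simpl. f_equal; ring. }
  assert (EX : expect Lam (xsqop Lam k) c =
    RtoC (sR Lam (fun m => bcoef Lam k m ^ 2) / (2 * INR Lam + 1))).
  { unfold expect, inner.
    rewrite (sumZ_ext _ _ (fun m => RtoC (/ (2 * INR Lam + 1) * / 2 *
        (bcoef Lam k m ^ 2 + bcoef Lam k (m + 1) ^ 2)))).
    2:{ intros m _. rewrite xsq_eq.
        transitivity (Cmult (RtoC ((bcoef Lam k m ^ 2 + bcoef Lam k (m + 1) ^ 2) / 2))
           (Cmult (Cconj (c m)) (c m))). ring.
        unfold c. rewrite omega_norm, RtoC_mult_eq. f_equal. field. pose proof (N_pos Lam). lra. }
    rewrite sumZ_RtoC, sR_scal, sR_plus.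
    rewrite (sR_shift Lam (fun m => bcoef Lam k m ^ 2)).
    2: rewrite bcoef_lo; ring. 2: rewrite bcoef_hi; ring.
    f_equal. pose proof (N_pos Lam). field. lra. }
  unfold varX. rewrite E1, E2, EM, EX.
  change (inner Lam c (xplus Lam k c)) with (EplusO Lam k a b).
  set (S := sR Lam _). clearbody S.
  destruct (EplusO Lam k a b) as [e1 e2]. simpl.
  unfold Cminus, Cplus, Cmult, Cinv, Copp, Cconj, RtoC, Ci; simpl. field. pose proof (N_pos Lam); lra.
Qed.

Lemma bcoef_ge0 Lam k m : 0 <= bcoef Lam k m.
Proof. unfold bcoef. destruct (_ && _)%bool. apply sqrt_pos. lra. Qed.

Lemma Cmod_omega Lam a b m : Cmod (omega Lam a b m) = sqrt (/ (2 * INR Lam + 1)).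
Proof.
  unfold Cmod. f_equal. pose proof (omega_norm Lam a b m) as H.
  apply (f_equal fst) in H. destruct (omega Lam a b m) as [x y]. simpl in *. rewrite <- H. ring.
Qed.

Lemma Eplus_bound Lam k a b :
  Cmod (EplusO Lam k a b) <= sR Lam (bcoef Lam k) / (2 * INR Lam + 1).
Proof.
  unfold EplusO, inner, sumZ.
  rewrite Cmod_norm.
  eapply Rle_trans. apply (@norm_sum_n_m R_AbsRing C_R_NormedModule).
  unfold sR. rewrite Rdiv_def, Rmult_comm.
  rewrite <- (@sum_n_m_mult_l R_Ring). apply Req_le. apply sum_n_m_ext. intros j.
  rewrite <- Cmod_norm. unfold xplus. rewrite !Cmod_mult, Cmod_conj, !Cmod_omega, Cmod_R.
  rewrite Rabs_pos_eq by apply bcoef_ge0.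
  unfold mult; simpl.
  transitivity (bcoef Lam k (Z.of_nat j - Z.of_nat Lam)%Z * (sqrt (/ (2 * INR Lam + 1)) * sqrt (/ (2 * INR Lam + 1)))).
  ring. rewrite sqrt_sqrt. ring. left; apply Rinv_0_lt_compat, N_pos.
Qed.

Lemma Eplus_zero Lam k a :
  EplusO Lam k a (fun _ => 0) = Cmult (cexpi (- a)) (RtoC (/ (2 * INR Lam + 1) * sR Lam (bcoef Lam k))).
Proof.
  unfold EplusO, inner. rewrite <- sR_scal, <- sumZ_RtoC, <- sumZ_scal.
  apply sumZ_ext. intros m _. unfold xplus. rewrite !omega_eq, !Rplus_0_r.
  replace (a * IZR (m - 1)) with (a * IZR m + - a) by (rewrite minus_IZR; ring).
  rewrite cos_plus, sin_plus.
  pose proof (sqrtN_pos Lam). pose proof (sqrtN_sq Lam).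
  set (s := sqrt (2 * INR Lam + 1)) in *. rewrite <- H0.
  pose proof (sin2_cos2 (a * IZR m)). unfold Rsqr in H1.
  set (x := a * IZR m) in *. set (bb := bcoef Lam k m).
  unfold cexpi, Cconj, Cmult, RtoC; simpl. f_equal.
  - transitivity (cos (- a) * (/ (s * s) * bb) * (sin x * sin x + cos x * cos x)).
    field. lra. rewrite H1. ring.
  - transitivity (sin (- a) * (/ (s * s) * bb) * (sin x * sin x + cos x * cos x)).
    field. lra. rewrite H1. ring.
Qed.

Lemma Eplus_zero_sq Lam k a :
  fst (EplusO Lam k a (fun _ => 0)) ^ 2 + snd (EplusO Lam k a (fun _ => 0)) ^ 2 =
  (sR Lam (bcoef Lam k) / (2 * INR Lam + 1)) ^ 2.
Proof.
  rewrite Eplus_zero. pose proof (sin2_cos2 (- a)). unfold Rsqr in H.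
  unfold cexpi, Cmult, RtoC; simpl.
  set (r := sR Lam (bcoef Lam k)). unfold Rdiv.
  transitivity ((/ (2 * INR Lam + 1) * r) ^ 2 * (sin (-a) * sin (-a) + cos (-a) * cos (-a))). ring.
  rewrite H. ring.
Qed.

Lemma varX_ge Lam k a b :
  varX Lam k (omega Lam a b) >= varX Lam k (omega Lam a (fun _ => 0)).
Proof.
  rewrite !varX_formula, Eplus_zero_sq.
  pose proof (Eplus_bound Lam k a b) as H. pose proof (Cmod_ge_0 (EplusO Lam k a b)).
  assert (E : fst (EplusO Lam k a b) ^ 2 + snd (EplusO Lam k a b) ^ 2 = Cmod (EplusO Lam k a b) ^ 2).
  { unfold Cmod. rewrite pow2_sqrt. reflexivity. nra. }
  rewrite E. apply Rle_ge. apply Rplus_le_compat_l, Ropp_le_contravar.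
  apply pow_incr. lra.
Qed.

Lemma inv_nonneg k : 0 <= k -> 0 <= / k.
Proof.
  intros H. destruct (Req_dec k 0) as [->|]. rewrite Rinv_0; lra.
  left; apply Rinv_0_lt_compat; lra.
Qed.

Lemma mm1_nonneg m : 0 <= IZR m * (IZR m - 1).
Proof.
  destruct (Z_le_gt_dec m 0) as [H|H].
  - apply IZR_le in H. nra.
  - assert (1 <= IZR m) by (apply IZR_le; lia). nra.
Qed.

Lemma in_range_k Lam k m : k >= INR Lam ^ 2 * (INR Lam + 1) ^ 2 ->
  (1 - Z.of_nat Lam <= m)%Z -> (m <= Z.of_nat Lam)%Z -> 0 < k.
Proof.
  intros hk H1 H2. assert (1 <= Lam)%nat by lia. apply le_INR in H. simpl in H.
  assert (0 < INR Lam ^ 2 * (INR Lam + 1) ^ 2). { apply Rmult_lt_0_compat; apply pow_lt; lra. }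
  lra.
Qed.

Lemma sR_ind Lam : sR Lam (fun m => if Z.eqb m (- Z.of_nat Lam) then 0 else 1) = 2 * INR Lam.
Proof.
  unfold sR. rewrite (sum_n_m_ext_loc _ (fun j => if Nat.eqb j 0 then 0 else 1)).
  rewrite sum_ind, mult_INR. reflexivity.
  intros j _. destruct (Nat.eqb_spec j 0); destruct (Z.eqb_spec (Z.of_nat j - Z.of_nat Lam) (- Z.of_nat Lam)); try reflexivity; lia.
Qed.

Lemma SB_ge Lam k : k >= INR Lam ^ 2 * (INR Lam + 1) ^ 2 -> 2 * INR Lam <= sR Lam (bcoef Lam k).
Proof.
  intros hk. rewrite <- sR_ind. apply sR_le. intros m Hm.
  destruct (Z.eqb_spec m (- Z.of_nat Lam)). apply bcoef_ge0.
  unfold bcoef. replace (Z.leb (1 - Z.of_nat Lam) m && Z.leb m (Z.of_nat Lam))%bool with true.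
  2:{ symmetry. apply andb_true_intro; split; apply Z.leb_le; lia. }
  pose proof (in_range_k Lam k m hk ltac:(lia) ltac:(lia)).
  rewrite <- sqrt_1. apply sqrt_le_1_alt.
  pose proof (mm1_nonneg m). assert (0 <= IZR m * (IZR m - 1) / k).
  { apply Rmult_le_pos; auto. apply inv_nonneg; lra. }
  rewrite sqrt_1. lra.
Qed.

Lemma S2_le Lam k : k >= INR Lam ^ 2 * (INR Lam + 1) ^ 2 ->
  sR Lam (fun m => bcoef Lam k m ^ 2) <=
  2 * INR Lam + / k * (INR Lam * (INR Lam + 1) * (2 * INR Lam + 1) / 3).
Proof.
  intros hk.
  assert (hk0 : 0 <= k). { assert (0 <= INR Lam ^ 2 * (INR Lam + 1) ^ 2).
    { pose proof (pos_INR Lam). apply Rmult_le_pos; apply pow_le; lra. } lra. }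
  eapply Rle_trans.
  apply (sR_le _ _ (fun m => (if Z.eqb m (- Z.of_nat Lam) then 0 else 1) + / k * (IZR m ^ 2 + - IZR m))).
  2:{ rewrite sR_plus, sR_ind, sR_scal, sR_plus, sR_opp, sR_sq, sR_id. lra. }
  intros m Hm. pose proof (mm1_nonneg m). pose proof (inv_nonneg k hk0).
  destruct (Z.eqb_spec m (- Z.of_nat Lam)).
  - subst m. rewrite bcoef_lo. nra.
  - unfold bcoef. replace (Z.leb (1 - Z.of_nat Lam) m && Z.leb m (Z.of_nat Lam))%bool with true.
    2:{ symmetry. apply andb_true_intro; split; apply Z.leb_le; lia. }
    assert (0 <= IZR m * (IZR m - 1) / k) by (apply Rmult_le_pos; auto).
    rewrite pow2_sqrt by lra. unfold Rdiv. nra.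
Qed.

Lemma final_ineq (L k : R) : 1 <= L -> k >= L ^ 2 * (L + 1) ^ 2 ->
  2 * L / (2 * L + 1) ^ 2 + L * (L + 1) / (3 * k) < 1 / (L + 1) * (1 / 2 + 1 / (3 * L)).
Proof.
  intros HL hk.
  assert (hp : 0 < L ^ 2 * (L + 1) ^ 2) by (apply Rmult_lt_0_compat; apply pow_lt; lra).
  assert (h1 : L * (L + 1) / (3 * k) <= 1 / (3 * L * (L + 1))).
  { unfold Rdiv. apply Rle_trans with (L * (L + 1) * / (3 * (L ^ 2 * (L + 1) ^ 2))).
    apply Rmult_le_compat_l. nra. apply Rinv_le_contravar; nra.
    right. field. lra. }
  assert (h2 : 2 * L / (2 * L + 1) ^ 2 = 1 / (2 * (L + 1)) - 1 / (2 * (L + 1) * (2 * L + 1) ^ 2)).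
  { field. lra. }
  assert (h3 : 0 < 1 / (2 * (L + 1) * (2 * L + 1) ^ 2)).
  { apply Rdiv_lt_0_compat. lra. apply Rmult_lt_0_compat. lra. apply pow_lt; lra. }
  assert (h4 : 1 / (L + 1) * (1 / 2 + 1 / (3 * L)) = 1 / (2 * (L + 1)) + 1 / (3 * L * (L + 1))).
  { field. lra. }
  lra.
Qed.

Lemma varX_bound Lam k a : k >= INR Lam ^ 2 * (INR Lam + 1) ^ 2 ->
  varX Lam k (omega Lam a (fun _ => 0)) < 1 / (INR Lam + 1) * (1 / 2 + 1 / (3 * INR Lam)).
Proof.
  intros hk. rewrite varX_formula, Eplus_zero_sq.
  pose proof (SB_ge Lam k hk). pose proof (S2_le Lam k hk). pose proof (N_pos Lam).
  pose proof (pos_INR Lam).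
  set (N := 2 * INR Lam + 1) in *.
  assert (A : (2 * INR Lam / N) ^ 2 <= (sR Lam (bcoef Lam k) / N) ^ 2).
  { apply pow_incr. split. apply Rmult_le_pos; [lra|left; apply Rinv_0_lt_compat; lra].
    unfold Rdiv. apply Rmult_le_compat_r; [left; apply Rinv_0_lt_compat; lra|lra]. }
  assert (B : sR Lam (fun m => bcoef Lam k m ^ 2) / N <=
              (2 * INR Lam + / k * (INR Lam * (INR Lam + 1) * N / 3)) / N).
  { unfold Rdiv. apply Rmult_le_compat_r; [left; apply Rinv_0_lt_compat; lra|lra]. }
  destruct Lam as [|L].
  - simpl in *. replace (3 * 0) with 0 by ring. unfold Rdiv. rewrite Rinv_0.
    replace ((2 * 0 + / k * (0 * (0 + 1) * N * / 3)) * / N) with 0 in B by ring. lra.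
  - assert (HL : 1 <= INR (S L)) by (rewrite S_INR; pose proof (pos_INR L); lra).
    pose proof (final_ineq (INR (S L)) k HL hk).
    assert (0 < k) by (apply (in_range_k (S L) k 1%Z hk); lia).
    assert (E : (2 * INR (S L) + / k * (INR (S L) * (INR (S L) + 1) * N / 3)) / N
               - (2 * INR (S L) / N) ^ 2 =
               2 * INR (S L) / (2 * INR (S L) + 1) ^ 2 + INR (S L) * (INR (S L) + 1) / (3 * k)).
    { unfold N. field. split; lra. }
    lra.
Qed.

Lemma period_Z (j : Z) (p : R) :
  sin (2 * PI * IZR j + p) = sin p /\ cos (2 * PI * IZR j + p) = cos p.
Proof.
  destruct (Z_le_gt_dec 0 j) as [H|H].
  - rewrite <- (Z2Nat.id j H), <- INR_IZR_INZ.
    replace (2 * PI * INR (Z.to_nat j) + p) with (p + 2 * INR (Z.to_nat j) * PI) by ring.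
    split; [apply sin_period|apply cos_period].
  - assert (E : j = (- Z.of_nat (Z.to_nat (- j)))%Z) by lia. rewrite E, opp_IZR, <- INR_IZR_INZ.
    set (n := Z.to_nat (- j)).
    set (y := 2 * PI * - INR n + p).
    assert (Hp : p = y + 2 * INR n * PI) by (unfold y; ring).
    clearbody y. rewrite Hp, sin_period, cos_period. split; reflexivity.
Qed.

Lemma test_pair (f : R -> C) a b l1 l2 :
  is_RInt (V := R_NormedModule) (fun t => fst (f t)) a b l1 ->
  is_RInt (V := R_NormedModule) (fun t => snd (f t)) a b l2 ->
  is_RInt (V := C_R_CompleteNormedModule) f a b (l1, l2).
Proof.
  intros H1 H2. exact (is_RInt_fct_extend_pair (U := R_NormedModule) (V := R_NormedModule) f a b l1 l2 H1 H2).
Qed.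

Lemma int_osc (j : Z) (p w1 w2 : R) : j <> 0%Z ->
  is_RInt (V := C_R_CompleteNormedModule)
    (fun t => Cmult (cexpi (t * IZR j + p)) (w1, w2)) 0 (2 * PI) (0, 0).
Proof.
  intros Hj. assert (Hj' : IZR j <> 0) by (apply not_0_IZR; auto).
  destruct (period_Z j p) as [Ps Pc].
  apply test_pair; simpl.
  - apply (is_RInt_ext (fun t => cos (t * IZR j + p) * w1 - sin (t * IZR j + p) * w2)).
    { intros; reflexivity. }
    set (F := fun t => (sin (t * IZR j + p) * w1 + cos (t * IZR j + p) * w2) / IZR j).
    assert (Hv : minus (F (2 * PI)) (F 0) = 0).
    { unfold F, minus, plus, opp; simpl. rewrite Ps, Pc. replace (0 * IZR j + p) with p by ring. field. auto. }
    enough (HH : is_RInt (V := R_NormedModule) (fun t => _) 0 (2 * PI) (minus (F (2 * PI)) (F 0)))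
      by (rewrite Hv in HH; exact HH).
    apply (is_RInt_derive (V := R_CompleteNormedModule)).
    + intros x _. unfold F. auto_derive. trivial. field. auto.
    + intros x _. apply (ex_derive_continuous (K := R_AbsRing) (V := R_NormedModule)). auto_derive. trivial.
  - apply (is_RInt_ext (fun t => cos (t * IZR j + p) * w2 + sin (t * IZR j + p) * w1)).
    { intros; reflexivity. }
    set (F := fun t => (sin (t * IZR j + p) * w2 - cos (t * IZR j + p) * w1) / IZR j).
    assert (Hv : minus (F (2 * PI)) (F 0) = 0).
    { unfold F, minus, plus, opp; simpl. rewrite Ps, Pc. replace (0 * IZR j + p) with p by ring. field. auto. }
    enough (HH : is_RInt (V := R_NormedModule) (fun t => _) 0 (2 * PI) (minus (F (2 * PI)) (F 0)))
      by (rewrite Hv in HH; exact HH).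
    apply (is_RInt_derive (V := R_CompleteNormedModule)).
    + intros x _. unfold F. auto_derive. trivial. field. auto.
    + intros x _. apply (ex_derive_continuous (K := R_AbsRing) (V := R_NormedModule)). auto_derive. trivial.
Qed.

Lemma int_const (p w1 w2 : R) :
  is_RInt (V := C_R_CompleteNormedModule)
    (fun t => Cmult (cexpi (t * IZR 0 + p)) (w1, w2)) 0 (2 * PI)
    (Cmult (RtoC (2 * PI)) (Cmult (cexpi p) (w1, w2))).
Proof.
  set (X := Cmult (cexpi p) (w1, w2)).
  replace (Cmult (RtoC (2 * PI)) X) with ((2 * PI) * fst X, (2 * PI) * snd X)
    by (destruct X; unfold Cmult, RtoC; simpl; f_equal; ring).
  apply test_pair.
  - apply (is_RInt_ext (fun _ => fst X)).
    { intros. unfold X. rewrite Rmult_0_r, Rplus_0_l. reflexivity. }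
    enough (HH : is_RInt (V := R_NormedModule) (fun _ => fst X) 0 (2 * PI) (scal (2 * PI - 0) (fst X)))
      by (replace (scal (2 * PI - 0) (fst X)) with (2 * PI * fst X) in HH
            by (unfold scal; simpl; unfold mult; simpl; ring); exact HH).
    exact (is_RInt_const (V := R_NormedModule) 0 (2 * PI) (fst X)).
  - apply (is_RInt_ext (fun _ => snd X)).
    { intros. unfold X. rewrite Rmult_0_r, Rplus_0_l. reflexivity. }
    enough (HH : is_RInt (V := R_NormedModule) (fun _ => snd X) 0 (2 * PI) (scal (2 * PI - 0) (snd X)))
      by (replace (scal (2 * PI - 0) (snd X)) with (2 * PI * snd X) in HH
            by (unfold scal; simpl; unfold mult; simpl; ring); exact HH).
    exact (is_RInt_const (V := R_NormedModule) 0 (2 * PI) (snd X)).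
Qed.

Lemma is_RInt_sum (f : nat -> R -> C) (l : nat -> C) a b n :
  (forall j, (j <= n)%nat -> is_RInt (V := C_R_CompleteNormedModule) (f j) a b (l j)) ->
  is_RInt (V := C_R_CompleteNormedModule)
    (fun t => @sum_n_m C_AbelianGroup (fun j => f j t) 0 n) a b (@sum_n_m C_AbelianGroup l 0 n).
Proof.
  induction n; intros H.
  - apply (is_RInt_ext (f 0%nat)). intros; rewrite sum_n_n; reflexivity.
    rewrite sum_n_n. apply H; lia.
  - apply (is_RInt_ext (fun t => plus (@sum_n_m C_AbelianGroup (fun j => f j t) 0 n) (f (S n) t))).
    intros x _. rewrite sum_n_Sm by lia. reflexivity.
    rewrite sum_n_Sm by lia. apply (is_RInt_plus (V := C_R_CompleteNormedModule)).
    apply IHn; intros; apply H; lia. apply H; lia.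
Qed.

Lemma sum_delta (j0 : nat) (r : R) n :
  @sum_n_m R_AbelianGroup (fun j => if Nat.eqb j j0 then r else 0) 0 n = if Nat.leb j0 n then r else 0.
Proof.
  induction n.
  - rewrite sum_n_n. destruct j0; reflexivity.
  - rewrite sum_n_Sm by lia. rewrite IHn, plusR.
    destruct (Nat.leb_spec j0 n), (Nat.leb_spec j0 (S n)), (Nat.eqb_spec (S n) j0); try lia; toR; ring.
Qed.

Lemma sR_delta Lam n r : (- Z.of_nat Lam <= n <= Z.of_nat Lam)%Z ->
  sR Lam (fun m => if Z.eqb m n then r else 0) = r.
Proof.
  intros Hn. unfold sR.
  rewrite (sum_n_m_ext_loc _ (fun j => if Nat.eqb j (Z.to_nat (n + Z.of_nat Lam)) then r else 0)).
  rewrite sum_delta. replace (Nat.leb _ _) with true. reflexivity. symmetry; apply Nat.leb_le; lia.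
  intros j _. destruct (Z.eqb_spec (Z.of_nat j - Z.of_nat Lam) n), (Nat.eqb_spec j (Z.to_nat (n + Z.of_nat Lam))); try reflexivity; lia.
Qed.

Lemma sumZ_delta Lam n x : (- Z.of_nat Lam <= n <= Z.of_nat Lam)%Z ->
  sumZ Lam (fun m => if Z.eqb m n then x else (0, 0)) = x.
Proof.
  intros Hn. rewrite sumZ_pair. destruct x as [x1 x2]. f_equal.
  - transitivity (sR Lam (fun m => if Z.eqb m n then x1 else 0)); [|apply sR_delta; auto].
    apply sR_ext. intros m _. destruct (Z.eqb m n); reflexivity.
  - transitivity (sR Lam (fun m => if Z.eqb m n then x2 else 0)); [|apply sR_delta; auto].
    apply sR_ext. intros m _. destruct (Z.eqb m n); reflexivity.
Qed.

Lemma term_eq Lam al be (v : vec) n m :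
  Cmult (omega Lam al be n) (Cmult (Cconj (omega Lam al be m)) (v m)) =
  Cmult (cexpi (al * IZR (n - m) + (be n - be m)))
        (fst (v m) / (2 * INR Lam + 1), snd (v m) / (2 * INR Lam + 1)).
Proof.
  rewrite !omega_eq.
  replace (al * IZR (n - m) + (be n - be m)) with ((al * IZR n + be n) - (al * IZR m + be m))
    by (rewrite minus_IZR; ring).
  unfold cexpi. rewrite cos_minus, sin_minus.
  pose proof (sqrtN_pos Lam). pose proof (sqrtN_sq Lam).
  set (s := sqrt (2 * INR Lam + 1)) in *. rewrite <- H0.
  destruct (v m) as [v1 v2].
  unfold cexpi, Cconj, Cmult; simpl. f_equal; field; lra.
Qed.

Lemma part_i Lam (beta : Z -> R) (v : vec) (n : Z) :
  (- Z.of_nat Lam <= n <= Z.of_nat Lam)%Z ->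
  Cmult (RtoC ((2 * INR Lam + 1) / (2 * PI)))
        (@RInt C_R_CompleteNormedModule (fun alpha => Pop Lam alpha beta v n) 0 (2 * PI)) = v n.
Proof.
  intros Hn.
  set (N := 2 * INR Lam + 1).
  set (w := fun m => (fst (v m) / N, snd (v m) / N)).
  assert (HI : is_RInt (V := C_R_CompleteNormedModule) (fun alpha => Pop Lam alpha beta v n) 0 (2 * PI)
                 (Cmult (RtoC (2 * PI)) (w n))).
  { apply (is_RInt_ext (fun al => sumZ Lam (fun m => Cmult (cexpi (al * IZR (n - m) + (beta n - beta m))) (w m)))).
    { intros x _. unfold Pop, inner. rewrite <- sumZ_scal. apply sumZ_ext. intros m _.
      rewrite term_eq. reflexivity. }
    replace (Cmult (RtoC (2 * PI)) (w n)) with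
      (sumZ Lam (fun m => if Z.eqb m n then Cmult (RtoC (2 * PI)) (Cmult (cexpi (beta n - beta m)) (w m)) else (0, 0))).
    2:{ transitivity (sumZ Lam (fun m => if Z.eqb m n then Cmult (RtoC (2 * PI)) (Cmult (cexpi (beta n - beta n)) (w n)) else (0, 0))).
        { apply sumZ_ext. intros m _. destruct (Z.eqb_spec m n); subst; reflexivity. }
        rewrite sumZ_delta by auto. rewrite Rminus_diag. unfold cexpi. rewrite cos_0, sin_0.
        f_equal. destruct (w n). unfold Cmult; simpl; f_equal; ring. }
    unfold sumZ. apply is_RInt_sum. intros j _.
    destruct (Z.eqb_spec (Z.of_nat j - Z.of_nat Lam) n) as [E|E].
    - rewrite <- E. replace (Z.of_nat j - Z.of_nat Lam - (Z.of_nat j - Z.of_nat Lam))%Z with 0%Z by lia.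
      apply int_const.
    - apply int_osc. lia. }
  rewrite (is_RInt_unique _ _ _ _ HI).
  pose proof PI_RGT_0. pose proof (N_pos Lam). fold N in H0.
  unfold w. destruct (v n) as [v1 v2]. unfold Cmult, RtoC; simpl. f_equal; field; lra.
Qed.

Lemma last_ineq Lam : (2 <= Lam)%nat ->
  1 / (INR Lam + 1) * (1 / 2 + 1 / (3 * INR Lam)) <= 2 / (3 * (INR Lam + 1)).
Proof.
  intros H. apply le_INR in H. simpl in H.
  assert (h : 1 / (3 * INR Lam) <= 1 / 6).
  { unfold Rdiv. rewrite !Rmult_1_l. apply Rinv_le_contravar; lra. }
  replace (2 / (3 * (INR Lam + 1))) with (1 / (INR Lam + 1) * (2 / 3)) by (field; lra).
  apply Rmult_le_compat_l. unfold Rdiv. rewrite Rmult_1_l. left; apply Rinv_0_lt_compat; lra.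
  lra.
Qed.

Theorem mainTheorem5 (Lam : nat) (k : R)
  (hk : k >= INR Lam ^ 2 * (INR Lam + 1) ^ 2) :
  (forall (beta : Z -> R) (v : vec) (n : Z),
      (- Z.of_nat Lam <= n <= Z.of_nat Lam)%Z ->
      Cmult (RtoC ((2 * INR Lam + 1) / (2 * PI)))
            (@RInt C_R_CompleteNormedModule
                   (fun alpha => Pop Lam alpha beta v n) 0 (2 * PI)) = v n) /\
  (forall (alpha : R) (beta : Z -> R), 0 <= alpha < 2 * PI ->
      expect Lam Lop (omega Lam alpha beta) = RtoC 0 /\
      varL Lam (omega Lam alpha beta) = RtoC (INR Lam * (INR Lam + 1) / 3)) /\
  (forall (alpha : R) (beta : Z -> R), 0 <= alpha < 2 * PI ->
      varX Lam k (omega Lam alpha beta) >= varX Lam k (omega Lam alpha (fun _ => 0))) /\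
  (forall alpha : R, 0 <= alpha < 2 * PI ->
      varX Lam k (omega Lam alpha (fun _ => 0))
        < 1 / (INR Lam + 1) * (1 / 2 + 1 / (3 * INR Lam))) /\
  ((2 <= Lam)%nat ->
      1 / (INR Lam + 1) * (1 / 2 + 1 / (3 * INR Lam)) <= 2 / (3 * (INR Lam + 1))).
Proof.
  split; [|split; [|split; [|split]]].
  - intros. apply part_i; auto.
  - intros. split; [apply expect_L|apply varL_omega].
  - intros. apply varX_ge.
  - intros. apply varX_bound; auto.
  - apply last_ineq.
Qed.
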